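(* Let $\phi\in\,]0,\pi[$, $M\in\mathbb{R}$, $N>0$. Let $\Sigma$ be the Keplerian branch around ${\rm O}$ in the plane ${\rm O}xy$ with equation $r=My+N$. Consider the affine map $(x_1,y_1)\mapsto(x_2,y_2)$ defined by $x_1=x_2\sin\phi-y_2M\cos\phi-N\cos\phi$, $y_1=y_2$. Then the image of $\Sigma$ by this map is the Keplerian branch around ${\rm O}$ with equation $r=x\cos\phi+yM\sin\phi+N\sin\phi$.
   Context: In the Euclidean plane ${\rm O}xy$, $r=\sqrt{x^2+y^2}$. A Keplerian branch around ${\rm O}$ is the image of a solution of Newton's system $\ddot q=-q/\|q\|^3$ (extended through collisions by bouncing back along the same ray with the same energy). For $\gamma>0$, the set of points satisfying $r=\alpha x+\beta y+\gamma$ is an (irreducible) Keplerian branch around ${\rm O}$, and every nonrectilinear Keplerian branch is of this form. *)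

(* Defs.v *)
From Stdlib Require Import Reals.
Open Scope R_scope.

Definition rad (x y : R) : R := sqrt (x ^ 2 + y ^ 2).

Definition kepler_branch (a b c : R) (p : R * R) : Prop :=
  rad (fst p) (snd p) = a * fst p + b * snd p + c.

(* Main.v *)
Require Import Defs.
From Stdlib Require Import Reals Lra Psatz.
Open Scope R_scope.

Lemma sqrt_eq_iff (a b : R) : 0 <= a -> (sqrt a = b <-> a = b * b /\ 0 <= b).
Proof.
  intros Ha; split.
  - intros <-. split; [rewrite sqrt_sqrt; lra | apply sqrt_pos].
  - intros [-> Hb]. apply sqrt_square; lra.
Qed.


Theorem lemma5 (phi M N : R) (hphi0 : 0 < phi) (hphi1 : phi < PI) (hN : 0 < N) :
  forall x2 y2 : R,
    (exists x1 y1 : R,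
        kepler_branch 0 M N (x1, y1) /\
        x1 = x2 * sin phi - y2 * M * cos phi - N * cos phi /\
        y1 = y2)
    <-> kepler_branch (cos phi) (M * sin phi) (N * sin phi) (x2, y2).
Proof.
  intros x y.
  assert (hs : 0 < sin phi) by (apply sin_gt_0; lra).
  assert (hsc : sin phi * sin phi + cos phi * cos phi = 1) by (pose proof (sin2_cos2 phi) as K; unfold Rsqr in K; lra).
  assert (hc : -1 <= cos phi <= 1) by apply COS_bound.
  set (s := sin phi) in *. set (c := cos phi) in *.
  unfold kepler_branch, rad; simpl fst; simpl snd.
  set (x1 := x * s - y * M * c - N * c).
  set (L1 := M * y + N).
  assert (E : x1 * x1 + y * y - L1 * L1 =
              x * x + y * y - (c * x + M * s * y + N * s) * (c * x + M * s * y + N * s)).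
  { assert (K : x1 * x1 + y * y - L1 * L1 -
              (x * x + y * y - (c * x + M * s * y + N * s) * (c * x + M * s * y + N * s))
              = ((s*s+c*c) - 1) * (x*x + L1*L1)) by (unfold x1, L1; ring).
    rewrite hsc in K. lra. }
  assert (E2 : L1 = s * (c * x + M * s * y + N * s) - c * x1).
  { assert (K : L1 - (s * (c * x + M * s * y + N * s) - c * x1) = (1 - (s*s+c*c)) * L1)
      by (unfold x1, L1; ring).
    rewrite hsc in K. lra. }
  assert (E3 : x1 = x * s - c * L1) by (unfold x1, L1; ring).
  split.
  - intros (a & b & H & -> & ->).
    rewrite sqrt_eq_iff in H by nra.
    destruct H as [H1 H2].
    fold x1 in H1, H2; replace (0 * x1 + M * y + N) with L1 in H1, H2 by (unfold L1; ring).
    apply sqrt_eq_iff; [nra|].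
    replace (y * (y * 1)) with (y*y) by ring.
    replace (x ^ 2 + y ^ 2) with (x*x+y*y) by ring.
    replace (x * (x * 1)) with (x*x) by ring.
    fold x1 in H1.
    replace (x ^ 2) with (x*x) in * by ring. replace (y ^ 2) with (y*y) in * by ring.
    assert (Heq : x * x + y * y = (c * x + M * s * y + N * s) * (c * x + M * s * y + N * s)) by lra. split; [exact Heq|].
    set (L2 := c * x + M * s * y + N * s) in *.
    destruct (Rle_or_lt 0 L2) as [|HL]; [auto|exfalso].
    assert (Hx2 : x * x <= L2 * L2) by nra.
    assert (Hx : -L2 >= x /\ -L2 >= -x) by (split; nra).
    assert (Hcx : c * x >= L2) by (destruct (Rle_or_lt 0 x); nra).
    assert (HL2 : L2 = c * x + s * L1) by (unfold L2, L1; ring).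
    assert (HsL : s * L1 <= 0) by lra.
    assert (HL1 : L1 = 0) by (destruct (Rle_or_lt L1 0); nra).
    assert (y = 0) by (rewrite HL1 in H1; nra).
    unfold L1 in HL1. subst y. lra.
  - intros H.
    rewrite sqrt_eq_iff in H by nra.
    destruct H as [H1 H2].
    exists x1, y. split; [|split; reflexivity].
    apply sqrt_eq_iff; [nra|].
    replace (0 * x1 + M * y + N) with L1 by (unfold L1; ring).
    replace (x1 ^ 2 + y ^ 2) with (x1*x1+y*y) by ring.
    replace (x ^ 2 + y ^ 2) with (x*x+y*y) in H1 by ring.
    assert (Heq : x1 * x1 + y * y = L1 * L1) by lra. split; [exact Heq|].
    set (L2 := c * x + M * s * y + N * s) in *.
    destruct (Rle_or_lt 0 L1) as [|HL]; [auto|exfalso].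
    assert (Hx2 : x1 * x1 <= L1 * L1) by nra.
    assert (Hcx : - c * x1 >= L1) by (destruct (Rle_or_lt 0 x1); nra).
    assert (HsL : s * L2 <= 0) by lra.
    assert (HL2 : L2 = 0) by (destruct (Rle_or_lt L2 0); nra).
    assert (y = 0) by (rewrite HL2 in H1; nra).
    unfold L1 in HL. subst y. lra.
Qed.
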